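(* Let $\Gamma=(\gamma_n)_{n\ge1}$ be distinct complex numbers with $\inf_n|\gamma_{n+1}|/|\gamma_n|>1$, and let $v=(v_n)$ be positive numbers with $\sum_nv_n<\infty$. If $\mu$ is a nonnegative measure on $\mathbb{C}$ with $\mu(\Gamma)=0$, then $H_{(\Gamma,v)}$ is bounded from $\ell^2_v$ to $L^2(\mathbb{C},\mu)$ if and only if \[ \sup_{n\ge1}\int_{\mathbb{C}}\frac{v_n\,d\mu(z)}{|z-\gamma_n|^2}<\infty. \]
   Context: $\ell^2_v=\{(a_n):\sum|a_n|^2v_n<\infty\}$; for $z\in\mathbb{C}\setminus\Gamma$, $H_{(\Gamma,v)}a(z)=\sum_na_nv_n/(z-\gamma_n)$. *)

(* Defs.v *)
From HB Require Import structures.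
From mathcomp Require Import all_boot all_order all_algebra.
From mathcomp Require Import all_classical all_reals all_analysis.
From mathcomp Require Import complex.
Set Implicit Arguments. Unset Strict Implicit. Unset Printing Implicit Defensive.
Import Order.TTheory GRing.Theory Num.Theory.
Import numFieldNormedType.Exports.
Local Open Scope ring_scope.
Local Open Scope classical_set_scope.


Section Defs.
Variable R : realType.

Definition cabs2 (w : R[i]) : R := complex.Re w ^+ 2 + complex.Im w ^+ 2.

(* the point (x,y) of the plane R*R seen as the complex number x + i y;
   the complex plane carries the product (= Borel) sigma-algebra of R*R *)
Definition toC (z : R * R) : R[i] := complex.Complex z.1 z.2.

Definition in_l2v (v : nat -> R) (a : nat -> R[i]) : Prop :=
  cvg ([series cabs2 (a n) * v n]_n @ \oo).

Definition l2v_norm2 (v : nat -> R) (a : nat -> R[i]) : R :=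
  limn ([series cabs2 (a n) * v n]_n).

Definition Hterm (gamma : nat -> R[i]) (v : nat -> R) (a : nat -> R[i])
  (w : R[i]) (n : nat) : R[i] :=
  a n * complex.Complex (v n) 0 / (w - gamma n).

Definition H (gamma : nat -> R[i]) (v : nat -> R) (a : nat -> R[i])
  (w : R[i]) : R[i] :=
  complex.Complex (limn ([series complex.Re (Hterm gamma v a w n)]_n))
                  (limn ([series complex.Im (Hterm gamma v a w n)]_n)).

End Defs.

(* Main.v *)
Require Import Defs.
From HB Require Import structures.
From mathcomp Require Import all_boot all_order all_algebra.
From mathcomp Require Import all_classical all_reals all_analysis.
From mathcomp Require Import complex.
From mathcomp Require Import ring lra.
From mathcomp Require Import measurable_realfun.
Import Order.TTheory GRing.Theory Num.Theory.
Import numFieldNormedType.Exports.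
Local Open Scope ring_scope.
Local Open Scope classical_set_scope.
Section S.
Variable R : realType.
Local Notation nc w := (Num.sqrt (cabs2 w)).

Lemma cabs2_ge0 (w : R[i]) : 0 <= cabs2 w.
Proof. by rewrite /cabs2 addr_ge0 ?sqr_ge0. Qed.

Lemma nc_normc (w : R[i]) : nc w = Normc.normc w.
Proof. by case: w. Qed.

Lemma nc_ge0 (w : R[i]) : 0 <= nc w. Proof. exact: sqrtr_ge0. Qed.

Lemma nc_sqr (w : R[i]) : nc w ^+ 2 = cabs2 w.
Proof. by rewrite sqr_sqrtr // cabs2_ge0. Qed.

Lemma ncM (x y : R[i]) : nc (x * y) = nc x * nc y.
Proof. by rewrite !nc_normc Normc.normcM. Qed.

Lemma ncV (x : R[i]) : nc (x^-1) = (nc x)^-1.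
Proof. by rewrite !nc_normc Normc.normcV. Qed.

Lemma ncD (x y : R[i]) : nc (x + y) <= nc x + nc y.
Proof. by rewrite !nc_normc le_normcD. Qed.

Lemma ncN (x : R[i]) : nc (- x) = nc x.
Proof. by rewrite !nc_normc normcN. Qed.

Lemma ncB (x y : R[i]) : nc x - nc y <= nc (x - y).
Proof. rewrite lerBlDr; apply: le_trans (ncD _ _); by rewrite subrK. Qed.

Lemma nc_eq0 (x : R[i]) : (nc x == 0) = (x == 0).
Proof.
apply/eqP/eqP => [|->]; last by rewrite /cabs2 /= expr0n /= addr0 sqrtr0.
by rewrite nc_normc => /Normc.eq0_normc.
Qed.

Lemma nc_real (v : R) : nc (Complex v 0) = `|v|.
Proof. by rewrite /cabs2 /= expr0n /= addr0 sqrtr_sqr. Qed.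

Lemma Re_le (w : R[i]) : `|complex.Re w| <= nc w.
Proof.
rewrite -sqrtr_sqr; apply: ler_wsqrtr; rewrite /cabs2 lerDl sqr_ge0 //.
Qed.

Lemma Im_le (w : R[i]) : `|complex.Im w| <= nc w.
Proof.
rewrite -sqrtr_sqr; apply: ler_wsqrtr; rewrite /cabs2 lerDr sqr_ge0 //.
Qed.
Lemma test (q D en em gn c : R) :  1 < q -> 0 <= en -> 0 <= em -> 0 < c -> c * (q - 1) = q + 3 ->
  D - en <= 2 * gn -> (q - 1) * gn <= en + em -> c * en < D -> c * em < D -> False.
Proof.
move=> q1 en0 em0 c0 hc h1 h2 h3 h4.
have A : (q - 1) * (D - en) <= (q - 1) * (2 * gn) by rewrite ler_wpM2l // subr_ge0 ltW.
have B : (q - 1) * D <= (q + 1) * en + 2 * em by nra.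
have C : c * ((q - 1) * D) <= c * ((q + 1) * en + 2 * em) by rewrite ler_wpM2l // ltW.
have E1 : c * ((q - 1) * D) = (q + 3) * D by rewrite mulrA hc.
have E2 : c * ((q + 1) * en + 2 * em) = (q + 1) * (c * en) + 2 * (c * em) by ring.
have F1 : (q + 1) * (c * en) <= (q + 1) * D by rewrite ler_wpM2l ?ltW //; lra.
have F2 : 2 * (c * em) < 2 * D by rewrite ltr_pM2l.
lra.
Qed.

Section Lac.
Variable gamma : nat -> R[i].
Variable q : R.
Hypothesis q1 : 1 < q.
Hypothesis hlac : forall n, q * nc (gamma n) <= nc (gamma n.+1).

Lemma nc_step n : nc (gamma n) <= nc (gamma n.+1).
Proof.
apply: le_trans (hlac n); rewrite ler_peMl ?nc_ge0 //; exact: ltW.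
Qed.

Lemma nc_mono n m : (n <= m)%N -> nc (gamma n) <= nc (gamma m).
Proof.
elim: m => [|m IH]; first by rewrite leqn0 => /eqP ->.
rewrite leq_eqVlt => /orP[/eqP -> //|]; rewrite ltnS => /IH h.
exact: le_trans h (nc_step m).
Qed.

Lemma nc_lt n m : (n < m)%N -> q * nc (gamma n) <= nc (gamma m).
Proof. move=> nm; exact: le_trans (hlac n) (@nc_mono n.+1 m nm). Qed.

Definition cc := 1 + 4 / (q - 1).
Definition DD (w : R[i]) := nc w + nc (gamma 0).

Lemma cc_gt0 : 0 < cc.
Proof.
rewrite /cc; have : 0 < 4 / (q - 1) by apply: divr_gt0; rewrite ?subr_gt0.
lra.
Qed.

Lemma cc_eq : cc * (q - 1) = q + 3.
Proof. rewrite /cc mulrDl mul1r mulrAC -mulrA divff ?mulr1; [lra|]. 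
by rewrite subr_eq0 gt_eqF. Qed.

Lemma near_uniq1 w n m : (n < m)%N -> cc * nc (w - gamma n) < DD w ->
  cc * nc (w - gamma m) < DD w -> False.
Proof.
move=> nm hn hm.
apply: (@test q (DD w) (nc (w - gamma n)) (nc (w - gamma m)) (nc (gamma n)) cc q1 (nc_ge0 _) (nc_ge0 _) cc_gt0 cc_eq _ _ hn hm).
- have h1 := ncB w (gamma n).
  have h2 := @nc_mono 0 n (leq0n n).
  rewrite /DD; lra.
- have h3 := @nc_lt n m nm.
  have h4 := ncB (gamma m) (gamma n).
  have h5 : gamma m - gamma n = (w - gamma n) + - (w - gamma m) by ring.
  have h6 := ncD (w - gamma n) (- (w - gamma m)).
  rewrite ncN -h5 in h6.
  lra.
Qed.

Lemma near_uniq w n m : cc * nc (w - gamma n) < DD w ->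
  cc * nc (w - gamma m) < DD w -> n = m.
Proof.
move=> hn hm; case: (ltngtP n m) => // nm; exfalso.
- exact: near_uniq1 nm hn hm.
- exact: near_uniq1 nm hm hn.
Qed.
End Lac.

Lemma cs_fin (al v : nat -> R) N : (forall n, 0 <= v n) ->
  (\sum_(0 <= n < N) al n * v n) ^+ 2 <=
  (\sum_(0 <= n < N) v n) * (\sum_(0 <= n < N) al n ^+ 2 * v n).
Proof.
move=> v0; elim: N => [|N IH]; first by rewrite !big_geq // expr0n /= mul0r.
rewrite !big_nat_recr //=.
set T := \sum_(0 <= n < N) al n * v n in IH *.
set S := \sum_(0 <= n < N) v n in IH *.
set U := \sum_(0 <= n < N) al n ^+ 2 * v n in IH *.
have S0 : 0 <= S by rewrite /S sumr_ge0.
have U0 : 0 <= U by rewrite /U sumr_ge0 // => i _; rewrite mulr_ge0 ?sqr_ge0.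
have vN := v0 N.
have K : 2 * T * al N <= S * al N ^+ 2 + U.
  have E1 : T ^+ 2 * al N ^+ 2 <= S * U * al N ^+ 2 by rewrite ler_wpM2r ?sqr_ge0.
  have P0 : 0 <= S * al N ^+ 2 by rewrite mulr_ge0 ?sqr_ge0.
  set X := S * al N ^+ 2 in P0 *.
  have E2 : (2 * T * al N) ^+ 2 <= (X + U) ^+ 2.
    have -> : (2 * T * al N) ^+ 2 = 4 * (T ^+ 2 * al N ^+ 2) by ring.
    have : 0 <= (X - U) ^+ 2 by apply: sqr_ge0.
    have : S * U * al N ^+ 2 = X * U by rewrite /X; ring.
    nra.
  have XU : 0 <= X + U by rewrite addr_ge0.
  move: E2; set Y := 2 * T * al N => E2.
  case: (lerP Y (X + U)) => // hY.
  have : (X + U) ^+ 2 < Y ^+ 2 by rewrite ltr_pXn2r // ?nnegrE; lra.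
  lra.
nra.
Qed.

Lemma near_sum (P : pred nat) (u : nat -> R) N :
  (forall n m, P n -> P m -> n = m) ->
  (\sum_(0 <= n < N) (if P n then u n else 0)) ^+ 2 <= \sum_(0 <= n < N) u n ^+ 2.
Proof.
move=> Pu; elim: N => [|N IH]; first by rewrite !big_geq // expr0n.
rewrite !big_nat_recr //=.
have Q0 : 0 <= \sum_(0 <= n < N) u n ^+ 2 by rewrite sumr_ge0 // => i _; rewrite sqr_ge0.
case: ifP => PN.
  have -> : \sum_(0 <= n < N) (if P n then u n else 0) = 0.
    rewrite big_nat_cond big1 // => n /andP[/andP[_ nN] _]; case: ifP => // Pn.
    by have := Pu n N Pn PN => E; rewrite E ltnn in nN.
  rewrite add0r lerDr //.
by rewrite addr0 (le_trans IH) // lerDl sqr_ge0.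
Qed.

Lemma series_ge0_nd {u : nat -> R} : (forall n, 0 <= u n) -> nondecreasing_seq (series u).
Proof. move=> u0; exact: (@nondecreasing_series R u xpredT 0) => n _ _. Qed.

Lemma series_le_lim (u : nat -> R) N : (forall n, 0 <= u n) -> cvgn (series u) ->
  series u N <= limn (series u).
Proof. move=> u0 cu; exact: (nondecreasing_cvgn_le (series_ge0_nd (u := u) u0) cu). Qed.

Lemma nneseries_lim (u : nat -> R) : cvgn (series u) ->
  (\sum_(n <oo) (u n)%:E = (limn (series u))%:E)%E.
Proof.
move=> cu; rewrite -EFin_lim //; congr (limn _); apply/funext => N /=.
by rewrite sumEFin.
Qed.

Lemma abs_bound (x : nat -> R) B :
  (forall N, (\sum_(0 <= n < N) `|x n|) ^+ 2 <= B) ->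
  cvgn (series x) /\ (limn (series x)) ^+ 2 <= B.
Proof.
move=> hB.
have B0 : 0 <= B by apply: le_trans (hB 0%N); rewrite sqr_ge0.
have sb N : \sum_(0 <= n < N) `|x n| <= Num.sqrt B.
  rewrite -(ger0_norm (sumr_ge0 _ _)); last by move=> i _; rewrite normr_ge0.
  by rewrite -sqrtr_sqr ler_wsqrtr.
have nd : nondecreasing_seq (series (fun n => `|x n|)).
  by apply: series_ge0_nd => n; rewrite normr_ge0.
have cn : cvgn (series (fun n => `|x n|)).
  apply: nondecreasing_is_cvgn => //; exists (Num.sqrt B) => _ [N _ <-]; exact: sb.
have cn' : cvgn [normed series x] by exact: cn.
split; first exact: normed_cvg.
have h1 := lim_series_norm cn'.
have h2 : limn [normed series x] <= Num.sqrt B.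
  apply: limr_le => //; near=> N; exact: sb.
have h3 : `|limn (series x)| <= Num.sqrt B by exact: le_trans h1 h2.
rewrite -real_normK ?num_real // -(sqr_sqrtr B0) ler_pXn2r // ?nnegrE ?sqrtr_ge0 ?normr_ge0 //.
Unshelve. all: by end_near.
Qed.

Lemma measurable_inv : measurable_fun [set: R] (fun x : R => x^-1).
Proof.
have E : [set: R] = [set 0] `|` ~` [set 0] by rewrite setUv.
rewrite E; apply/measurable_funU; [exact: measurable_set1|apply: measurableC; exact: measurable_set1|].
split.
  have H : {in [set (0:R)], cst (0:R) =1 (fun x : R => x^-1)}.
    by move=> x /set_mem -> /=; rewrite invr0.
  exact: (eq_measurable_fun (cst (0:R)) H (measurable_cst _)).
apply: measurable_realfun.open_continuous_measurable_fun.
  rewrite openC; apply: accessible_closed_set1; apply: hausdorff_accessible; exact: Rhausdorff.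
move=> x /set_mem hx; apply: inv_continuous; exact/eqP.
Qed.
Lemma meas_h (g : R[i]) (c : R) :
  measurable_fun [set: (R * R)%type] (fun z : R * R => c / cabs2 (toC z - g)).
Proof.
case: g => gr gi; rewrite /cabs2 /toC /=.
apply: measurable_realfun.measurable_funM; first exact: measurable_cst.
apply: (measurableT_comp measurable_inv).
apply: measurable_realfun.measurable_funD; apply: measurable_realfun.measurable_funX; apply: measurable_realfun.measurable_funD;
  solve [exact: measurable_fst | exact: measurable_snd | exact: measurable_cst].
Qed.

Lemma int_mono (mu : {measure set (R * R)%type -> \bar R}) (f g : R * R -> \bar R) :
  (forall x, (0 <= f x)%E) -> (forall x, (f x <= g x)%E) ->
  (\int[mu]_x f x <= \int[mu]_x g x)%E.
Proof.
move=> f0 fg; rewrite !ge0_integralTE //; last by move=> x; apply: le_trans (f0 x) (fg x).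
apply: ereal_sup_le => _ [h hf <-]; exists h => //= x; exact: le_trans (hf x) (fg x).
Qed.

Section Main.
Variables (gamma : nat -> R[i]) (v : nat -> R) (a : nat -> R[i]) (q : R).
Hypothesis q1 : 1 < q.
Hypothesis hlac : forall n, q * nc (gamma n) <= nc (gamma n.+1).
Hypothesis g0 : gamma 0 != 0.
Hypothesis v0 : forall n, 0 < v n.
Hypothesis cv : cvgn (series v).
Hypothesis ca : in_l2v v a.

Let Ht n w := Hterm gamma v a w n.
Let near w n := cc q * nc (w - gamma n) < DD gamma w.
Let VV := limn (series v).
Let AA := l2v_norm2 v a.

Lemma DD_gt0 w : 0 < DD gamma w.
Proof.
rewrite /DD; apply: ltr_wpDl; first exact: nc_ge0.
rewrite lt_neqAle nc_ge0 andbT eq_sym nc_eq0 //.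
Qed.

Lemma nc_Ht n w : nc (Ht n w) = nc (a n) * v n / nc (w - gamma n).
Proof. by rewrite /Ht /Hterm ncM ncM ncV nc_real ger0_norm // ltW. Qed.

Lemma far_bound n w : ~~ near w n ->
  nc (Ht n w) <= cc q / DD gamma w * (nc (a n) * v n).
Proof.
rewrite /near -leNgt => hD.
have D0 := DD_gt0 w.
have e0 : 0 < nc (w - gamma n).
  rewrite lt_neqAle nc_ge0 andbT; apply/eqP => e; move: hD; rewrite -e mulr0.
  by rewrite leNgt D0.
rewrite nc_Ht [leRHS]mulrC; apply: ler_wpM2l; first by rewrite mulr_ge0 ?nc_ge0 ?ltW.
by rewrite ler_pdivlMr // mulrC ler_pdivrMr.
Qed.

Lemma VV_ge0 : 0 <= VV.
Proof. by have := @series_le_lim v 0%N (fun n => ltW (v0 n)) cv; rewrite /series /= big_geq. Qed.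

Lemma cs_part N : (\sum_(0 <= n < N) nc (a n) * v n) ^+ 2 <= VV * AA.
Proof.
apply: le_trans (cs_fin (fun n => nc (a n)) v N (fun n => ltW (v0 n))) _.
have h1 : \sum_(0 <= n < N) v n <= VV by exact: (@series_le_lim v N (fun n => ltW (v0 n)) cv).
have h2 : \sum_(0 <= n < N) nc (a n) ^+ 2 * v n <= AA.
  have -> : \sum_(0 <= n < N) nc (a n) ^+ 2 * v n = series (fun n => cabs2 (a n) * v n) N.
    by rewrite /series /=; apply: eq_bigr => i _; rewrite nc_sqr.
  apply: series_le_lim => //; move=> n; rewrite mulr_ge0 ?cabs2_ge0 // ltW //.
apply: ler_pM => //; first by rewrite sumr_ge0 // => i _; apply: ltW.
by rewrite sumr_ge0 // => i _; rewrite mulr_ge0 ?sqr_ge0 // ltW.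
Qed.


Lemma comp_bound (f : R[i] -> R) (hf : forall z, `|f z| <= nc z) w g :
  (forall N, \sum_(0 <= n < N) cabs2 (Ht n w) <= g) ->
  cvgn (series (fun n => f (Ht n w))) /\
  (limn (series (fun n => f (Ht n w)))) ^+ 2 <=
     2 * g + 2 * ((cc q / DD gamma w) ^+ 2 * (VV * AA)).
Proof.
move=> hg; apply: abs_bound => N.
set k := cc q / DD gamma w.
have k0 : 0 <= k by rewrite divr_ge0 // ltW // ?DD_gt0 // cc_gt0.
set P := \sum_(0 <= n < N) (if near w n then nc (Ht n w) else 0).
set Q := \sum_(0 <= n < N) nc (a n) * v n.
set S := \sum_(0 <= n < N) `|f (Ht n w)|.
have S0 : 0 <= S by rewrite sumr_ge0 // => i _; rewrite normr_ge0.
have P0 : 0 <= P by rewrite sumr_ge0 // => i _; case: ifP => _; rewrite ?nc_ge0.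
have Q0 : 0 <= Q by rewrite sumr_ge0 // => i _; rewrite mulr_ge0 ?nc_ge0 // ltW.
have h1 : S <= P + k * Q.
  rewrite /S /P /Q mulr_sumr -big_split; apply: ler_sum => n _ /=.
  case: ifP => hn.
    apply: le_trans (hf _) _; rewrite lerDl mulr_ge0 // mulr_ge0 ?nc_ge0 // ltW //.
  rewrite add0r; apply: le_trans (hf _) _; apply: far_bound; by rewrite hn.
have h2 : P ^+ 2 <= g.
  apply: le_trans (near_sum (fun n => near w n) (fun n => nc (Ht n w)) N _) _.
    move=> n m; rewrite /near; exact: (@near_uniq gamma q q1 hlac w n m).
  apply: le_trans (hg N); apply: ler_sum => n _; rewrite nc_sqr //.
have h3 := cs_part N.
have h4 : S ^+ 2 <= (P + k * Q) ^+ 2 by rewrite ler_pXn2r // ?nnegrE // addr_ge0 // mulr_ge0.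
have h5 : (k * Q) ^+ 2 <= k ^+ 2 * (VV * AA) by rewrite exprMn ler_wpM2l // sqr_ge0.
have h6 : 0 <= (P - k * Q) ^+ 2 by apply: sqr_ge0.
nra.
Qed.

Let G w := (\sum_(n <oo) (cabs2 (Ht n w))%:E)%E.

Lemma pw w : ((cabs2 (H gamma v a w))%:E <=
   4%:E * G w + (4 * ((cc q / DD gamma w) ^+ 2 * (VV * AA)))%:E)%E.
Proof.
have G0 : (0 <= G w)%E by apply: nneseries_ge0 => n _ _; rewrite lee_fin cabs2_ge0.
case E: (G w) => [g| |]; last by rewrite E in G0.
- have hg : forall N, \sum_(0 <= n < N) cabs2 (Ht n w) <= g.
    move=> N; rewrite -lee_fin -E -sumEFin.
    by apply: nneseries_lim_ge => n _ _; rewrite lee_fin cabs2_ge0.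
  have [_ hx] := comp_bound (@complex.Re R) Re_le w g hg.
  have [_ hy] := comp_bound (@complex.Im R) Im_le w g hg.
  rewrite -EFinM -EFinD lee_fin /cabs2 /H /=.
  move: hx hy; rewrite /Ht; lra.
- by rewrite muleC gt0_mulye ?lte_fin // addye // leey.
Qed.


Hypothesis g01 : gamma 0 != gamma 1.
Let KK := (v 0)^-1 + cabs2 (gamma 0 - gamma 1) / (4 * v 1 * cabs2 (gamma 0)).

Lemma cabs2_gt0 {x : R[i]} : x != 0 -> 0 < cabs2 x.
Proof.
move=> x0; rewrite -nc_sqr exprn_gt0 // lt_neqAle nc_ge0 andbT eq_sym nc_eq0 //.
Qed.

Lemma invDD w : (DD gamma w ^+ 2)^-1 <=
  KK * (v 0 / cabs2 (w - gamma 0) + v 1 / cabs2 (w - gamma 1)).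
Proof.
have c0 := cabs2_gt0 (x := gamma 0) g0.
have h1ge : 0 <= v 1 / cabs2 (w - gamma 1) by rewrite divr_ge0 ?cabs2_ge0 // ltW.
have h0ge : 0 <= v 0 / cabs2 (w - gamma 0) by rewrite divr_ge0 ?cabs2_ge0 // ltW.
have K1 : 0 <= (v 0)^-1 by rewrite invr_ge0 ltW.
have K2 : 0 <= cabs2 (gamma 0 - gamma 1) / (4 * v 1 * cabs2 (gamma 0)).
  by apply: divr_ge0; [exact: cabs2_ge0| rewrite !mulr_ge0 ?cabs2_ge0 // ltW].
have [e|ne] := eqVneq w (gamma 0).
- rewrite e subrr /cabs2 /= expr0n /= addr0 invr0 mulr0 add0r.
  rewrite -/(cabs2 (gamma 0 - gamma 1)).
  have c1 : 0 < cabs2 (gamma 0 - gamma 1) by apply: cabs2_gt0; rewrite subr_eq0.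
  have -> : DD gamma (gamma 0) ^+ 2 = 4 * cabs2 (gamma 0).
    by rewrite /DD -[in RHS]nc_sqr; ring.
  apply: le_trans (_ : cabs2 (gamma 0 - gamma 1) / (4 * v 1 * cabs2 (gamma 0)) * (v 1 / cabs2 (gamma 0 - gamma 1)) <= _).
    rewrite le_eqVlt; apply/orP; left; apply/eqP; field.
    by rewrite !gt_eqF // v0.
  apply: ler_wpM2r; first by rewrite divr_ge0 ?cabs2_ge0 // ltW.
  by rewrite /KK lerDr.
- have c2 : 0 < cabs2 (w - gamma 0) by apply: cabs2_gt0; rewrite subr_eq0.
  have hD : cabs2 (w - gamma 0) <= DD gamma w ^+ 2.
    rewrite -nc_sqr ler_pXn2r ?nnegrE ?nc_ge0 //; last by rewrite addr_ge0 ?nc_ge0.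
    have := ncD w (- gamma 0); rewrite ncN /DD //.
  apply: le_trans (_ : (v 0)^-1 * (v 0 / cabs2 (w - gamma 0)) <= _).
    rewrite mulrA mulVf ?gt_eqF // mul1r lef_pV2 // ?posrE //.
    by apply: lt_le_trans hD.
  rewrite mulrDr; apply: le_trans (_ : KK * (v 0 / cabs2 (w - gamma 0)) <= _).
    by apply: ler_wpM2r => //; rewrite /KK lerDl.
  by rewrite lerDl mulr_ge0 // addr_ge0.
Qed.


Lemma cabs2_Ht n w : cabs2 (Ht n w) = cabs2 (a n) * v n * (v n / cabs2 (w - gamma n)).
Proof.
rewrite -[LHS]nc_sqr nc_Ht -[in RHS](nc_sqr (a n)) -[in RHS](nc_sqr (w - gamma n)) -exprVn.
ring.
Qed.

Variable mu : {measure set (R * R)%type -> \bar R}.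
Variable M : R.
Hypothesis hM : forall n, (\int[mu]_z (v n / cabs2 (toC z - gamma n))%:E <= M%:E)%E.


Let h n (z : R * R) := v n / cabs2 (toC z - gamma n).

Lemma h_ge0 n z : 0 <= h n z.
Proof. by rewrite /h divr_ge0 ?cabs2_ge0 // ltW. Qed.

Lemma M_ge0 : 0 <= M.
Proof.
rewrite -lee_fin; apply: le_trans (hM 0); apply: integral_ge0 => z _.
by rewrite lee_fin h_ge0.
Qed.

Lemma AA_ge0 : 0 <= AA.
Proof.
apply: le_trans (@series_le_lim (fun n => cabs2 (a n) * v n) 0%N _ ca).
  by rewrite /series /= big_geq.
by move=> n; rewrite mulr_ge0 ?cabs2_ge0 // ltW.
Qed.

Let cst4 := 4 * (cc q) ^+ 2 * (VV * AA) * KK.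

Lemma hpt z : ((cabs2 (H gamma v a (toC z)))%:E <=
   4%:E * G (toC z) + cst4%:E * ((h 0 z)%:E + (h 1 z)%:E))%E.
Proof.
apply: le_trans (pw (toC z)) _; apply: leeD2l.
rewrite -EFinD -EFinM lee_fin /cst4 expr_div_n.
have hD := invDD (toC z).
have VA : 0 <= VV * AA by rewrite mulr_ge0 ?VV_ge0 ?AA_ge0.
have c2 : 0 <= cc q ^+ 2 by rewrite sqr_ge0.
rewrite /h; set X := (DD gamma (toC z) ^+ 2)^-1 in hD *.
set Y := (_ + _) in hD *.
have -> : 4 * (cc q ^+ 2 / DD gamma (toC z) ^+ 2 * (VV * AA)) =
  (4 * cc q ^+ 2 * (VV * AA)) * X by rewrite /X; ring.
have -> : 4 * cc q ^+ 2 * (VV * AA) * KK * Y = (4 * cc q ^+ 2 * (VV * AA)) * (KK * Y) by ring.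
apply: ler_wpM2l; first by apply: mulr_ge0 => //; apply: mulr_ge0.
exact: hD.
Qed.


Lemma mh n : measurable_fun [set: (R * R)%type] (EFin \o h n).
Proof. apply/measurable_EFinP; exact: meas_h. Qed.

Lemma mg n : measurable_fun [set: (R * R)%type] (EFin \o (fun z => cabs2 (Ht n (toC z)))).
Proof.
apply/measurable_EFinP.
under eq_fun do rewrite cabs2_Ht.
apply: measurable_realfun.measurable_funM; first exact: measurable_cst.
exact: meas_h.
Qed.

Lemma int_bound : (\int[mu]_z (cabs2 (H gamma v a (toC z)))%:E <=
  4%:E * (AA * M)%:E + cst4%:E * (M%:E + M%:E))%E.
Proof.
apply: (le_trans (@int_mono mu (fun z => (cabs2 (H gamma v a (toC z)))%:E)
  (fun z => 4%:E * G (toC z) + cst4%:E * ((h 0 z)%:E + (h 1 z)%:E))%E _ hpt)).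
  by move=> z; rewrite lee_fin cabs2_ge0.
have G0 z : (0 <= G (toC z))%E by apply: nneseries_ge0 => n _ _; rewrite lee_fin cabs2_ge0.
have c0 : 0 <= cst4.
  have K0 : 0 <= KK.
    apply: addr_ge0; first by rewrite invr_ge0 ltW.
    by apply: divr_ge0; [exact: cabs2_ge0| rewrite !mulr_ge0 ?cabs2_ge0 // ltW].
  have ccp : 0 <= cc q by apply: ltW; apply: cc_gt0.
  by rewrite /cst4 !mulr_ge0 ?sqr_ge0 ?VV_ge0 ?AA_ge0.
have mG : measurable_fun [set: (R * R)%type] (fun z => G (toC z)).
  have := @ge0_emeasurable_sum _ _ R [set: (R * R)%type] (fun n z => (cabs2 (Ht n (toC z)))%:E) xpredT.
  apply.
  - by move=> k z _ _; rewrite lee_fin cabs2_ge0.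
  - by move=> k _; exact: mg.
have mh01 : measurable_fun [set: (R * R)%type] (fun z => (h 0 z)%:E + (h 1 z)%:E)%E.
  by apply: emeasurable_funD; exact: mh.
have h01 z : (0 <= (h 0 z)%:E + (h 1 z)%:E)%E by rewrite adde_ge0 // lee_fin h_ge0.
have m4G : measurable_fun [set: (R * R)%type] (fun z => 4%:E * G (toC z))%E.
  exact: measurable_funeM.
have mcH : measurable_fun [set: (R * R)%type] (fun z => cst4%:E * ((h 0 z)%:E + (h 1 z)%:E))%E.
  exact: measurable_funeM.
have f1p : forall z, [set: (R * R)%type] z -> (0 <= 4%:E * G (toC z))%E.
  by move=> z _; rewrite mule_ge0.
have f2p : forall z, [set: (R * R)%type] z -> (0 <= cst4%:E * ((h 0 z)%:E + (h 1 z)%:E))%E.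
  by move=> z _; rewrite mule_ge0.
rewrite (ge0_integralD mu measurableT f1p m4G f2p mcH).
rewrite ge0_integralZl //; try (by move=> z _; exact: G0); try (by rewrite lee_fin).
rewrite ge0_integralZl //; try (by move=> z _; exact: h01); try (by rewrite lee_fin).
rewrite ge0_integralD //; try (by move=> z _; rewrite lee_fin h_ge0); try exact: mh.
apply: leeD.
  apply: lee_wpmul2l; first by rewrite lee_fin.
  rewrite /G integral_nneseries //; last first.
    by move=> n z _; rewrite lee_fin cabs2_ge0.
    by move=> n; exact: mg.
  apply: le_trans (_ : (\sum_(n <oo) (M%:E * (cabs2 (a n) * v n)%:E) <= _)%E).
    apply: lee_nneseries.
      by move=> n _ _; apply: integral_ge0 => z _; rewrite lee_fin cabs2_ge0.
    move=> n _.
    under eq_integral do rewrite cabs2_Ht EFinM.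
    rewrite ge0_integralZl //; last 3 first.
    - exact: mh.
    - by move=> z _; rewrite lee_fin h_ge0.
    - by rewrite lee_fin mulr_ge0 ?cabs2_ge0 // ltW.
    rewrite [X in (_ <= X)%E]muleC; apply: lee_wpmul2l; first by rewrite lee_fin mulr_ge0 ?cabs2_ge0 // ltW.
    exact: hM.
  rewrite nneseriesZl; last by move=> n _; rewrite lee_fin mulr_ge0 ?cabs2_ge0 // ltW.
  rewrite (@nneseries_lim (fun n => cabs2 (a n) * v n) ca) -EFinM lee_fin mulrC //.
apply: lee_wpmul2l; first by rewrite lee_fin.
by apply: leeD; apply: hM.
Qed.

End Main.

Lemma single_series (f : nat -> R) n : (forall m, m != n -> f m = 0) ->
  series f @ \oo --> f n.
Proof.
move=> hf; apply: cvg_near_cst; exists n.+1 => // N /= hN.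
rewrite /series /= (bigD1_seq n) ?mem_index_iota ?iota_uniq //=.
by rewrite big1 ?addr0 // => m /andP[_ mn]; exact: hf.
Qed.

Lemma single_lim (f : nat -> R) n : (forall m, m != n -> f m = 0) ->
  limn (series f) = f n.
Proof. by move=> hf; apply: cvg_lim => //; exact: single_series. Qed.

Section Forward.
Variables (gamma : nat -> R[i]) (v : nat -> R).
Hypothesis v0 : forall n, 0 < v n.
Variable mu : {measure set (R * R)%type -> \bar R}.
Variable C : R.
Hypothesis hC : forall a : nat -> R[i], in_l2v v a ->
      (\int[mu]_z (cabs2 (H gamma v a (toC z)))%:E <= (C * l2v_norm2 v a)%:E)%E.

Lemma forward n : (\int[mu]_z (v n / cabs2 (toC z - gamma n))%:E <= C%:E)%E.
Proof.
pose e := fun m : nat => if m == n then (1 : R[i]) else 0.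
have e0 m : m != n -> e m = 0 by rewrite /e => /negbTE ->.
have se m : m != n -> cabs2 (e m) * v m = 0.
  by move=> /e0 ->; rewrite /cabs2 /= expr0n /= addr0 mul0r.
have ce : in_l2v v e by apply/cvg_ex; exists (cabs2 (e n) * v n); exact: single_series.
have ne : l2v_norm2 v e = v n.
  rewrite /l2v_norm2 (@single_lim (fun m => cabs2 (e m) * v m) n se) /e eqxx /cabs2 /= expr0n expr1n /= addr0 mul1r //.
have hte w m : m != n -> Hterm gamma v e w m = 0 by move=> /e0 he; rewrite /Hterm he !mul0r.
have He w : H gamma v e w = Hterm gamma v e w n.
  rewrite /H (@single_lim (fun m => complex.Re (Hterm gamma v e w m)) n); last first.
    by move=> m /hte ->.
  rewrite (@single_lim (fun m => complex.Im (Hterm gamma v e w m)) n); last first.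
    by move=> m /hte ->.
  by case: (Hterm gamma v e w n).
have := hC e ce; rewrite ne.
have -> : (fun z => (cabs2 (H gamma v e (toC z)))%:E) =
   (fun z => (v n)%:E * (v n / cabs2 (toC z - gamma n))%:E)%E.
  apply/funext => z; rewrite He -EFinM; congr (_%:E).
  rewrite -[LHS]nc_sqr /Hterm /e eqxx mul1r ncM ncV nc_real ger0_norm ?ltW //.
  rewrite -[in RHS](nc_sqr (toC z - gamma n)) -exprVn; ring.
rewrite ge0_integralZl //; last 3 first.
- apply/measurable_EFinP; exact: meas_h.
- by move=> z _; rewrite lee_fin divr_ge0 ?cabs2_ge0 // ltW.
- by rewrite lee_fin ltW.
rewrite mulrC EFinM lee_pmul2l //; rewrite ?fin_numE //= ?lte_fin //.
Qed.
End Forward.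
End S.

Theorem corollary2 (R : realType) (gamma : nat -> R[i]) (v : nat -> R)
  (gamma_inj : injective gamma)
  (gamma_neq0 : forall n, gamma n != 0)
  (gamma_lac : exists2 q : R, 1 < q &
      forall n, q * Num.sqrt (cabs2 (gamma n)) <= Num.sqrt (cabs2 (gamma n.+1)))
  (v_pos : forall n, 0 < v n)
  (v_sum : cvg ([series v n]_n @ \oo))
  (mu : {measure set (R * R)%type -> \bar R})
  (mu_Gamma : mu [set z | exists n, toC z = gamma n] = 0%E) :
  (exists C : R, forall a : nat -> R[i], in_l2v v a ->
      (\int[mu]_z (cabs2 (H gamma v a (toC z)))%:E <= (C * l2v_norm2 v a)%:E)%E)
  <->
  (exists M : R, forall n : nat,
      (\int[mu]_z (v n / cabs2 (toC z - gamma n))%:E <= M%:E)%E).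
Proof.
split.
  by move=> [C hC]; exists C => n; exact: (@forward R gamma v v_pos mu C hC n).
move=> [M hM]; have [q q1 hq] := gamma_lac.
have g01 : gamma 0 != gamma 1 by apply/eqP => /gamma_inj.
pose KK := (v 0)^-1 + cabs2 (gamma 0 - gamma 1) / (4 * v 1 * cabs2 (gamma 0)).
pose VV := limn (series v).
exists (4 * M + 4 * @cc R q ^+ 2 * VV * KK * (M + M)) => a ca.
apply: le_trans (@int_bound R gamma v a q q1 hq (gamma_neq0 0) v_pos v_sum ca g01 mu M hM) _.
rewrite -!EFinM -EFinD lee_fin le_eqVlt; apply/orP; left; apply/eqP.
rewrite /KK /VV; ring.
Qed.
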